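(* Let $G$ be a connected simple graph and let $e=uv\in E(G)$ be an edge that is not a bridge of $G$. Then $$\chi_{dom}(G)-1\leq \chi_{dom}(G-e)\leq \chi_{dom}(G)+2.$$
   Context: All graphs are finite and simple. A dominated coloring (dom-coloring) of a graph $H$ is a proper vertex coloring of $H$ such that for every color class $C$ there is a vertex $x\in V(H)$ adjacent to every vertex of $C$ (i.e. $C\subseteq N_H(x)$); we say $C$ is dominated by $x$. The dominated chromatic number $\chi_{dom}(H)$ is the minimum number of colors in a dominated coloring of $H$ (considered for graphs in which such a coloring exists). $G-e$ denotes the graph obtained from $G$ by deleting the edge $e$ (keeping all vertices). *)

(* Defs.v *)
From mathcomp Require Import all_boot.
Set Implicit Arguments. Unset Strict Implicit. Unset Printing Implicit Defensive.

Section Graphs.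
Variable T : finType.

Definition simple_graph (g : rel T) : Prop := symmetric g /\ irreflexive g.

Definition connected (g : rel T) : Prop := forall x y, connect g x y.

Definition del_edge (g : rel T) (u v : T) : rel T :=
  fun x y => g x y && ~~ (((x == u) && (y == v)) || ((x == v) && (y == u))).

Definition is_bridge (g : rel T) (u v : T) : Prop :=
  g u v /\ exists x y, connect g x y /\ ~~ connect (del_edge g u v) x y.

(* c : T -> 'I_k is a dominated coloring of g with (at most) k colors:
   proper, and every color class C is contained in N(x) for some x. *)
Definition dom_coloring (g : rel T) (k : nat) (c : {ffun T -> 'I_k}) : bool :=
  [forall x, forall y, g x y ==> (c x != c y)] &&
  [forall i : 'I_k, exists x, forall y, (c y == i) ==> g x y].

Definition has_dom_coloring (g : rel T) (k : nat) : bool :=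
  [exists c : {ffun T -> 'I_k}, dom_coloring g c].

(* Whenever a dominated coloring exists, one with at most #|T| colors exists
   (drop empty classes), so searching k in 0..#|T| is exhaustive. *)
Definition chi_dom (g : rel T) : nat :=
  find (has_dom_coloring g) (iota 0 #|T|.+1).

End Graphs.

(* Main.v *)
Require Import Defs.
From mathcomp Require Import all_boot.

Section Aux.
Variable T : finType.

Lemma recolor (h : rel T) k (c : T -> 'I_k) w :
 irreflexive h ->
 (forall x y, h x y -> x != w -> y != w -> c x != c y) ->
 (exists x, h x w) ->
 (forall i, exists x, forall y, c y == i -> y != w -> h x y) ->
 has_dom_coloring h k.+1.
Proof.
move=> irr prop [x0 hx0] dom.
apply/existsP; exists [ffun x => if x == w then ord_max else lift ord_max (c x)].
apply/andP; split.
- apply/forallP=> x; apply/forallP=> y; apply/implyP=> hxy; rewrite !ffunE.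
  have xy : x != y by apply: contraTneq hxy => ->; rewrite irr.
  have [xw|xw] := eqVneq x w; have [yw|yw] := eqVneq y w.
  + by subst; rewrite eqxx in xy.
  + by rewrite neq_lift.
  + by rewrite eq_sym neq_lift.
  + by rewrite (inj_eq lift_inj); apply: prop.
- apply/forallP=> i; case: (unliftP ord_max i) => [j ->|->].
  + have [x hx] := dom j; apply/existsP; exists x; apply/forallP=> y; rewrite ffunE.
    have [yw|yw] := eqVneq y w; first by rewrite (negbTE (neq_lift ord_max j)).
    rewrite (inj_eq lift_inj); apply/implyP=> cy; exact: hx.
  + apply/existsP; exists x0; apply/forallP=> y; rewrite ffunE.
    have [->|_] := eqVneq y w; first by rewrite eqxx hx0.
    by apply/implyP=> /eqP E; have := neq_lift ord_max (c y); rewrite E eqxx.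
Qed.

Lemma sing (h : rel T) : irreflexive h -> (forall y, exists x, h x y) ->
  has_dom_coloring h #|T|.
Proof.
move=> irr nb; apply/existsP; exists [ffun x => enum_rank x]; apply/andP; split.
- apply/forallP=> x; apply/forallP=> y; apply/implyP=> hxy; rewrite !ffunE.
  rewrite (inj_eq enum_rank_inj); by apply: contraTneq hxy => ->; rewrite irr.
- apply/forallP=> i; have [x hx] := nb (enum_val i); apply/existsP; exists x.
  apply/forallP=> y; rewrite ffunE; apply/implyP=> /eqP E; by rewrite -(enum_rankK y) E.
Qed.

Lemma nbr (h : rel T) (u v : T) : symmetric h -> (forall x y, connect h x y) ->
  u != v -> forall y, exists x, h x y.
Proof.
move=> sym con uv y.
pose z := if y == u then v else u.
have zy : z != y.
  by rewrite /z; have [->|yu] := eqVneq y u; rewrite eq_sym // eq_sym.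
have /connectP [p pth lst] := con y z.
case: p pth lst => [|a p] /= pth lst; first by rewrite lst eqxx in zy.
by exists a; rewrite sym; case/andP: pth.
Qed.

Lemma chi_P (h : rel T) : has_dom_coloring h #|T| -> has_dom_coloring h (chi_dom h).
Proof.
move=> Pn; rewrite /chi_dom.
have hs : has (has_dom_coloring h) (iota 0 #|T|.+1).
  by apply/hasP; exists #|T| => //; rewrite mem_iota add0n ltnSn.
have lt : find (has_dom_coloring h) (iota 0 #|T|.+1) < #|T|.+1.
  by rewrite -{2}(size_iota 0 #|T|.+1) -has_find.
by have := nth_find 0 hs; rewrite nth_iota.
Qed.

Lemma chi_le (h : rel T) k : has_dom_coloring h #|T| -> has_dom_coloring h k ->
  chi_dom h <= k.
Proof.
move=> Pn.
have H : forall k, k <= #|T| -> has_dom_coloring h k -> chi_dom h <= k.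
  move=> m mn Pm; rewrite leqNgt; apply/negP=> lt.
  have := before_find 0 lt; rewrite nth_iota ?add0n ?Pm //.
move=> Pk; case: (leqP k #|T|) => kn; first exact: H.
by apply: leq_trans (ltnW kn); apply: H.
Qed.

End Aux.
Arguments recolor {T h k} c w.
Arguments chi_P {T h}.
Arguments chi_le {T h k}.

Theorem theorem2p1 (T : finType) (g : rel T) (u v : T) :
  simple_graph g -> connected g -> g u v -> ~ is_bridge g u v ->
  chi_dom g - 1 <= chi_dom (del_edge g u v) <= chi_dom g + 2.
Proof.
move=> [sym irr] con guv nb.
set d := del_edge g u v.
have uv : u != v by apply: contraTneq guv => ->; rewrite irr.
have dcon : forall x y, connect d x y.
  move=> x y; apply/negPn/negP => nc; apply: nb; split => //; exists x, y; split => //.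
have dsym : symmetric d.
  move=> x y; rewrite /d /del_edge sym (andbC (y == u)) (andbC (y == v)); by rewrite [in RHS]orbC.
have dirr : irreflexive d by move=> x; rewrite /d /del_edge irr.
have dgsub : forall x y, d x y -> g x y by move=> x y /andP [].
have gd : forall x y, g x y -> y != u -> y != v -> d x y.
  move=> x y gxy yu yv; rewrite /d /del_edge gxy /=.
  by rewrite (negbTE yu) (negbTE yv) !andbF.
have gd2 : forall x y, g x y -> x != v -> y != v -> d x y.
  move=> x y gxy xv yv; rewrite /d /del_edge gxy /=.
  by rewrite (negbTE xv) (negbTE yv) andbF andFb.
have dnb := nbr _ _ _ _ dsym dcon uv.
have Pg := sing _ _ irr (nbr _ _ _ _ sym con uv).
have Pd := sing _ _ dirr dnb.
apply/andP; split.
- rewrite leq_subLR add1n.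
  apply: chi_le => //.
  have /existsP [c /andP [/forallP pc /forallP dc]] := chi_P Pd.
  apply: (recolor c v) => //.
  + move=> x y gxy xv yv; have /forallP /(_ y) /implyP := pc x; apply.
    exact: gd2.
  + by exists u.
  + move=> i; have /existsP [x /forallP hx] := dc i; exists x => y cy _.
    by apply: dgsub; have /implyP := hx y; apply.
- rewrite addn2.
  apply: chi_le => //.
  have /existsP [c /andP [/forallP pc /forallP dc]] := chi_P Pg.
  pose c1 x := if x == u then ord_max else lift ord_max (c x).
  apply: (recolor c1 v) => //.
  + move=> x y dxy xv yv.
    have xy : x != y by apply: contraTneq dxy => ->; rewrite dirr.
    rewrite /c1; have [xu|xu] := eqVneq x u; have [yu|yu] := eqVneq y u.
    * by subst; rewrite eqxx in xy.
    * exact: neq_lift.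
    * by rewrite eq_sym neq_lift.
    * rewrite (inj_eq lift_inj); have /forallP /(_ y) /implyP := pc x; apply.
      exact: dgsub.
  + move=> i; case: (unliftP ord_max i) => [j ->|->].
    * have /existsP [x /forallP hx] := dc j; exists x => y cy yv.
      move: cy; rewrite /c1; have [yu|yu] := eqVneq y u.
        by rewrite (negbTE (neq_lift ord_max j)).
      rewrite (inj_eq lift_inj) => cy.
      by apply: gd => //; have /implyP := hx y; apply.
    * have [x hx] := dnb u; exists x => y cy _.
      move: cy; rewrite /c1; have [->//|yu] := eqVneq y u.
      move=> /eqP E; by have := neq_lift ord_max (c y); rewrite E eqxx.
Qed.
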